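(* Let $\mathcal{L}$ be a finite algebraic language and $\mathcal{V}$ an equational class of $\mathcal{L}$-algebras. A finite set $\Sigma$ of $\mathcal{L}$-identities is exact in $\mathcal{V}$ if and only if the finitely presented algebra $\mathbf{Fp}_{\mathcal{V}}(\Sigma,\mathrm{Var}(\Sigma))$ is isomorphic to a subalgebra of $\mathbf{F}_{\mathcal{V}}(\omega)$.
   Context: $\mathbf{Fm}_{\mathcal{L}}(Y)$ is the formula algebra over variables $Y$ ($\omega$ = the countably infinite set of all variables); $\mathrm{Var}(\Sigma)$ is the set of variables occurring in $\Sigma$. $\mathbf{F}_{\mathcal{V}}(Y)$ is the free algebra of $\mathcal{V}$ over $Y$ and $h_{\mathcal{V}}\colon\mathbf{Fm}_{\mathcal{L}}(Y)\to\mathbf{F}_{\mathcal{V}}(Y)$ the canonical homomorphism. For a finite set $X\supseteq\mathrm{Var}(\Sigma)$, $\mathbf{Fp}_{\mathcal{V}}(\Sigma,X)$ is the quotient $\mathbf{F}_{\mathcal{V}}(X)/\Theta_\Sigma$, where $\Theta_\Sigma$ is the congruence generated by $\{(h_{\mathcal{V}}(\varphi),h_{\mathcal{V}}(\psi))\mid\varphi\approx\psi\in\Sigma\}$. $\Sigma$ is exact in $\mathcal{V}$ if there is a substitution (homomorphism) $\sigma\colon\mathbf{Fm}_{\mathcal{L}}(\mathrm{Var}(\Sigma))\to\mathbf{Fm}_{\mathcal{L}}(\omega)$ such that for all $\varphi,\psi\in\mathbf{Fm}_{\mathcal{L}}(\mathrm{Var}(\Sigma))$: $\mathcal{V}\models\Sigma\Rightarrow\varphi\approx\psi$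 (i.e., the quasi-identity $\bigwedge\Sigma\to\varphi\approx\psi$ holds in every algebra of $\mathcal{V}$) iff $\mathcal{V}\models\sigma(\varphi)\approx\sigma(\psi)$. *)

(* Defs.v *)
From Stdlib Require Import ClassicalEpsilon List.
From mathcomp Require Import all_boot.

Set Implicit Arguments.
Unset Strict Implicit.
Unset Printing Implicit Defensive.

Record language := Language {
  op_sym :> finType;
  arity : op_sym -> nat }.

Section UA.
Variable L : language.

Inductive term (X : Type) : Type :=
| tvar : X -> term X
| tapp : forall f : L, ('I_(arity f) -> term X) -> term X.
Arguments tvar {X} _.
Arguments tapp {X} f _.

Record algebra := Algebra {
  carrier :> Type;
  interp : forall f : L, ('I_(arity f) -> carrier) -> carrier }.
Arguments interp : clear implicits.

Fixpoint eval (A : algebra) (X : Type) (v : X -> A) (t : term X) : A :=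
  match t with
  | tvar x => v x
  | tapp f a => interp A f (fun i => eval v (a i))
  end.

Fixpoint subst (X Y : Type) (s : X -> term Y) (t : term X) : term Y :=
  match t with
  | tvar x => s x
  | tapp f a => tapp f (fun i => subst s (a i))
  end.

Fixpoint occurs (n : nat) (t : term nat) : Prop :=
  match t with
  | tvar m => n = m
  | tapp f a => exists i, occurs n (a i)
  end.

(* identities are pairs of terms over the variables omega = nat *)
Definition identity := (term nat * term nat)%type.

Definition satisfies (A : algebra) (e : identity) : Prop :=
  forall v : nat -> A, eval v e.1 = eval v e.2.

Definition equational_class (V : algebra -> Prop) : Prop :=
  exists E : identity -> Prop,
    forall A : algebra, V A <-> (forall e, E e -> satisfies A e).

Definition V_models (V : algebra -> Prop) (t s : term nat) : Prop :=
  forall A : algebra, V A -> satisfies A (t, s).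

Definition V_qmodels (V : algebra -> Prop) (Sigma : seq identity)
    (t s : term nat) : Prop :=
  forall A : algebra, V A -> forall v : nat -> A,
    (forall e, List.In e Sigma -> eval v e.1 = eval v e.2) ->
    eval v t = eval v s.

Definition VarS (Sigma : seq identity) (n : nat) : Prop :=
  exists e, List.In e Sigma /\ (occurs n e.1 \/ occurs n e.2).

Definition over (Y : nat -> Prop) (t : term nat) : Prop :=
  forall n, occurs n t -> Y n.

Definition exact (V : algebra -> Prop) (Sigma : seq identity) : Prop :=
  exists sigma : nat -> term nat,
    forall phi psi : term nat, over (VarS Sigma) phi -> over (VarS Sigma) psi ->
      (V_qmodels V Sigma phi psi <-> V_models V (subst sigma phi) (subst sigma psi)).

Lemma over_tapp (Y : nat -> Prop) (f : L) (a : 'I_(arity f) -> term nat) :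
  (forall i, over Y (a i)) -> over Y (tapp f a).
Proof. by move=> H n [i Hi]; apply: (H i). Qed.

Definition Fm (Y : nat -> Prop) : algebra :=
  {| carrier := {t : term nat | over Y t};
     interp := fun f a =>
       exist (over Y) (tapp f (fun i => proj1_sig (a i)))
             (over_tapp (fun i => proj2_sig (a i))) |}.

Inductive cg (A : algebra) (R : A -> A -> Prop) : A -> A -> Prop :=
| cg_base x y : R x y -> cg R x y
| cg_refl x : cg R x x
| cg_sym x y : cg R x y -> cg R y x
| cg_trans x y z : cg R x y -> cg R y z -> cg R x z
| cg_app (f : L) (a b : 'I_(arity f) -> A) :
    (forall i, cg R (a i) (b i)) -> cg R (interp A f a) (interp A f b).

Definition qcarrier (A : algebra) (R : A -> A -> Prop) : Type :=
  {P : A -> Prop | exists a, P = cg R a}.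

Definition qclass (A : algebra) (R : A -> A -> Prop) (a : A) : qcarrier R :=
  exist (fun P => exists a, P = cg R a) (cg R a) (ex_intro _ a erefl).

Definition qrepr (A : algebra) (R : A -> A -> Prop) (x : qcarrier R) : A :=
  proj1_sig (constructive_indefinite_description _ (proj2_sig x)).

Definition quot (A : algebra) (R : A -> A -> Prop) : algebra :=
  {| carrier := qcarrier R;
     interp := fun f a => qclass R (interp A f (fun i => qrepr (a i))) |}.

Definition thetaV (V : algebra -> Prop) (Y : nat -> Prop) (t s : Fm Y) : Prop :=
  V_models V (proj1_sig t) (proj1_sig s).

Definition FV (V : algebra -> Prop) (Y : nat -> Prop) : algebra :=
  quot (thetaV V (Y := Y)).

Definition hV (V : algebra -> Prop) (Y : nat -> Prop) (t : Fm Y) : FV V Y :=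
  qclass (thetaV V (Y := Y)) t.

Definition omega : nat -> Prop := fun _ => True.

Definition SigmaRel (V : algebra -> Prop) (Sigma : seq identity) (X : nat -> Prop)
    (x y : FV V X) : Prop :=
  exists e, List.In e Sigma /\
    exists t s : Fm X, proj1_sig t = e.1 /\ proj1_sig s = e.2 /\
      x = hV V t /\ y = hV V s.

Definition Fp (V : algebra -> Prop) (Sigma : seq identity) (X : nat -> Prop)
  : algebra := quot (@SigmaRel V Sigma X).

Definition subuniverse (B : algebra) (S : B -> Prop) : Prop :=
  forall (f : L) (a : 'I_(arity f) -> B), (forall i, S (a i)) -> S (interp B f a).

Definition is_hom (A B : algebra) (h : A -> B) : Prop :=
  forall (f : L) (a : 'I_(arity f) -> A),
    h (interp A f a) = interp B f (fun i => h (a i)).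

Definition iso_to_subalgebra (A B : algebra) : Prop :=
  exists S : B -> Prop, subuniverse S /\
    exists h : A -> B,
      is_hom h /\ injective h /\ (forall x, S (h x)) /\
      (forall y, S y -> exists x, h x = y).

End UA.

(* Main.v *)
From Stdlib Require Import ClassicalEpsilon ProofIrrelevance FunctionalExtensionality PropExtensionality List.
Require Import Defs.
From mathcomp Require Import all_boot.

Section Proofs.
Variable L : language.

Lemma hom_eval (A B : algebra L) (h : A -> B) (v : nat -> A) (t : term L nat) :
  is_hom h -> h (eval v t) = eval (fun n => h (v n)) t.
Proof.
move=> Hh; elim: t => [n|f a IH] //=.
rewrite Hh; congr (interp _); apply: functional_extensionality => i; exact: IH.
Qed.

Lemma qclass_eq (A : algebra L) (R : A -> A -> Prop) a b :
  qclass R a = qclass R b <-> cg R a b.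
Proof.
split.
- move=> E. have : proj1_sig (qclass R a) = proj1_sig (qclass R b) by rewrite E.
  move=> /= E2. rewrite E2. exact: cg_refl.
- move=> H. apply: eq_sig_hprop => /=; first by move=> *; apply: proof_irrelevance.
  apply: functional_extensionality => x; apply: propositional_extensionality; split.
  + move=> H1; apply: cg_trans (cg_sym H) H1.
  + move=> H1; apply: cg_trans H H1.
Qed.

Lemma qrepr_cg (A : algebra L) (R : A -> A -> Prop) (x : qcarrier R) :
  proj1_sig x = cg R (qrepr x).
Proof.
rewrite /qrepr. by case: (constructive_indefinite_description _ _).
Qed.

Lemma qclass_qrepr (A : algebra L) (R : A -> A -> Prop) (x : qcarrier R) :
  qclass R (qrepr x) = x.
Proof.
apply: eq_sig_hprop => /=; first by move=> *; apply: proof_irrelevance.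
by rewrite qrepr_cg.
Qed.

Lemma qrepr_qclass (A : algebra L) (R : A -> A -> Prop) a :
  cg R (qrepr (qclass R a)) a.
Proof.
have E := @qrepr_cg A R (qclass R a).
set q := qrepr (qclass R a) in E *.
have H : cg R a a by apply: cg_refl.
change ((proj1_sig (qclass R a)) a) in H. rewrite E in H. exact: H.
Qed.

Lemma qclass_hom (A : algebra L) (R : A -> A -> Prop) :
  is_hom (A := A) (B := quot R) (qclass R).
Proof.
move=> f a /=. apply/qclass_eq. apply: cg_app => i. apply: cg_sym; exact: qrepr_qclass.
Qed.

Definition varX (X : nat -> Prop) n (Hn : X n) : Fm L X :=
  exist (Defs.over X) (tvar L n) (fun m (Hm : occurs m (tvar L n)) => ltac:(simpl in Hm; by rewrite Hm)).

Lemma eval_gen (X : nat -> Prop) (B : algebra L) (g : Fm L X -> B) (w : nat -> B) :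
  is_hom g ->
  (forall n (Hn : X n), w n = g (@varX X n Hn)) ->
  forall phi (p : Defs.over X phi), eval w phi = g (exist _ phi p).
Proof.
move=> Hg Hw; elim => [n|f a IH] p /=.
- have Hn : X n by apply: p.
  rewrite (Hw n Hn); congr g; apply: eq_sig_hprop => //; move=> *; exact: proof_irrelevance.
- have pa : forall i, Defs.over X (a i) by move=> i m Hm; apply: p; exists i.
  transitivity (@interp L B f (fun i => g (exist _ (a i) (pa i)))).
    congr (interp _); apply: functional_extensionality => i; exact: IH.
  rewrite -Hg; congr g; apply: eq_sig_hprop => //; move=> *; exact: proof_irrelevance.
Qed.

Lemma eval_subst (A : algebra L) (z : nat -> A) (s : nat -> term L nat) t :
  eval z (subst s t) = eval (fun n => eval z (s n)) t.
Proof.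
elim: t => [n|f a IH] //=; congr (interp _); apply: functional_extensionality => i; exact: IH.
Qed.

Lemma Fm_eval (Y : nat -> Prop) (z : nat -> Fm L Y) t :
  proj1_sig (eval z t) = subst (fun n => proj1_sig (z n)) t.
Proof.
elim: t => [n|f a IH] //=; congr tapp; apply: functional_extensionality => i; exact: IH.
Qed.

Variable V : algebra L -> Prop.

Lemma cg_thetaV (Y : nat -> Prop) (a b : Fm L Y) : cg (thetaV V (Y:=Y)) a b -> thetaV V a b.
Proof.
elim => {a b}.
- by [].
- by move=> x A HA v.
- by move=> x y _ H A HA v; rewrite (H A HA v).
- by move=> x y z _ H1 _ H2 A HA v; rewrite (H1 A HA v) (H2 A HA v).
- move=> f a b _ IH A HA v /=; congr (interp _); apply: functional_extensionality => i.
  exact: (IH i A HA v).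
Qed.

Lemma hV_eq (Y : nat -> Prop) (a b : Fm L Y) :
  hV V a = hV V b <-> V_models V (proj1_sig a) (proj1_sig b).
Proof.
split; first by move/qclass_eq/cg_thetaV.
by move=> H; apply/qclass_eq; apply: cg_base.
Qed.


Lemma hom_comp (A B C : algebra L) (g : A -> B) (h : B -> C) :
  is_hom g -> is_hom h -> is_hom (fun x => h (g x)).
Proof. by move=> Hg Hh f a; rewrite Hg Hh. Qed.

Definition toO (t : term L nat) : Fm L omega :=
  exist (Defs.over omega) t (fun _ _ => I).

Variable Sigma : seq (identity L).
Hypothesis HV : equational_class V.

Let X := VarS Sigma.

Definition pi (t : Fm L X) : Fp V Sigma X :=
  qclass (SigmaRel (V:=V) Sigma (X:=X)) (hV V t).

Lemma pi_hom : is_hom pi.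
Proof. apply: hom_comp; exact: qclass_hom. Qed.

Lemma pi_repr (x : Fp V Sigma X) : pi (qrepr (qrepr x)) = x.
Proof. by rewrite /pi /hV !qclass_qrepr. Qed.

Lemma Fp_V : V (Fp V Sigma X).
Proof.
have [E HE] := HV. apply/HE => e Ee v.
pose r := fun n => qrepr (qrepr (v n)) : Fm L X.
have Ev : v = fun n => pi (r n) by apply: functional_extensionality => n; rewrite pi_repr.
rewrite Ev -(hom_eval _ _ _ _ _ pi_hom) -(hom_eval _ _ _ _ _ pi_hom).
rewrite /pi; congr (qclass _); apply/hV_eq; rewrite !Fm_eval => B HB z; rewrite !eval_subst.
exact: (proj1 (HE B) HB e Ee).
Qed.

Lemma overS1 e : List.In e Sigma -> Defs.over X e.1.
Proof. by move=> He n Hn; exists e; split => //; left. Qed.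
Lemma overS2 e : List.In e Sigma -> Defs.over X e.2.
Proof. by move=> He n Hn; exists e; split => //; right. Qed.

Lemma piA phi psi (p : Defs.over X phi) (q : Defs.over X psi) :
  pi (exist _ phi p) = pi (exist _ psi q) <-> V_qmodels V Sigma phi psi.
Proof.
split.
- move/qclass_eq => Hc A HA w Hw.
  pose g : FV V X -> A := fun x => eval w (proj1_sig (qrepr x)).
  have gh : forall t, g (hV V t) = eval w (proj1_sig t).
    move=> t; rewrite /g; exact: (@cg_thetaV _ _ _ (@qrepr_qclass _ _ t) A HA w).
  have ghom : is_hom g.
    move=> f a.
    change (g (hV V (@interp L (Fm L X) f (fun i => qrepr (a i)))) = @interp L A f (fun i => g (a i))).
    by rewrite gh.
  have key : forall x y, cg (SigmaRel (V:=V) Sigma (X:=X)) x y -> g x = g y.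
    move=> x y; elim => {x y}.
    + move=> x y [e [He [t [s [Et [Es [-> ->]]]]]]]; rewrite !gh Et Es; exact: Hw.
    + by [].
    + by move=> x y _ ->.
    + by move=> x y z _ -> _ ->.
    + move=> f a b _ IH; rewrite !ghom; congr (interp _); apply: functional_extensionality => i.
      exact: IH.
  by have := key _ _ Hc; rewrite !gh.
- move=> Hq.
  pose w n := match excluded_middle_informative (X n) with
              | left Hn => pi (@varX X n Hn)
              | right _ => pi (exist _ phi p) end.
  have Hw : forall n (Hn : X n), w n = pi (@varX X n Hn).
    move=> n Hn; rewrite /w; case: excluded_middle_informative => [Hn'|//].
    by rewrite (proof_irrelevance _ Hn Hn').
  have EV := @eval_gen X _ _ _ pi_hom Hw.
  rewrite -!EV; apply: Hq; first exact: Fp_V.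
  move=> e He; rewrite (EV _ (@overS1 e He)) (EV _ (@overS2 e He)).
  apply/qclass_eq; apply: cg_base; exists e; split => //.
  by exists (exist _ e.1 (@overS1 e He)), (exist _ e.2 (@overS2 e He)).
Qed.

Lemma main : exact V Sigma <-> iso_to_subalgebra (Fp V Sigma (VarS Sigma)) (FV V omega).
Proof.
split.
- move=> [sigma Hs].
  pose H (x : Fp V Sigma X) : FV V omega :=
    hV V (toO (subst sigma (proj1_sig (qrepr (qrepr x))))).
  have HP : forall t : Fm L X, H (pi t) = hV V (toO (subst sigma (proj1_sig t))).
    move=> t; rewrite /H; have := pi_repr (pi t).
    case: (qrepr (qrepr (pi t))) => phi p; case: t => psi q /= E.
    apply/hV_eq => /=; apply/Hs => //; exact/piA.
  have Hhom : is_hom H.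
    move=> f x.
    pose t := fun i => qrepr (qrepr (x i)) : Fm L X.
    have -> : x = fun i => pi (t i) by apply: functional_extensionality => i; rewrite pi_repr.
    rewrite -pi_hom HP.
    have -> : (fun i => H (pi (t i))) = (fun i => hV V (toO (subst sigma (proj1_sig (t i))))).
      by apply: functional_extensionality => i; rewrite HP.
    rewrite /hV -qclass_hom; congr (qclass _).
    by apply: eq_sig_hprop => //; move=> *; exact: proof_irrelevance.
  exists (fun y => exists x, H x = y); split.
    move=> f a Ha.
    pose x i := proj1_sig (constructive_indefinite_description _ (Ha i)).
    have -> : a = fun i => H (x i).
      apply: functional_extensionality => i; rewrite /x.
      by case: constructive_indefinite_description.
    by exists (@interp L _ f x); rewrite Hhom.
  exists H; split => //; split; last by split => // x; exists x.
  move=> x y; rewrite -(pi_repr x) -(pi_repr y) !HP.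
  case: (qrepr (qrepr x)) => phi p; case: (qrepr (qrepr y)) => psi q /=.
  move/hV_eq => /= E; apply/piA; exact/Hs.
- move=> [S [_ [h [hh [hi _]]]]].
  pose sigma n := match excluded_middle_informative (X n) with
              | left Hn => proj1_sig (qrepr (h (pi (@varX X n Hn))))
              | right _ => tvar L n end.
  exists sigma => phi psi p q.
  have key : forall phi (p : Defs.over X phi),
      hV V (toO (subst sigma phi)) = h (pi (exist _ phi p)).
    move=> t pt.
    have Hw : forall n (Hn : X n), hV V (toO (sigma n)) = (fun z => h (pi z)) (@varX X n Hn).
      move=> n Hn; rewrite /sigma; case: excluded_middle_informative => [Hn'|//].
      rewrite (proof_irrelevance _ Hn Hn') /=.
      rewrite -[RHS](@qclass_qrepr _ (thetaV V (Y:=omega))); rewrite /hV; congr (qclass _).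
      by apply: eq_sig_hprop => //; move=> *; exact: proof_irrelevance.
    rewrite -(@eval_gen X _ _ _ (@hom_comp _ _ _ _ _ pi_hom hh) Hw t pt).
    rewrite -(hom_eval _ _ _ _ _ (@qclass_hom _ (thetaV V (Y:=omega)))).
    congr (qclass _). apply: eq_sig_hprop => //; first by move=> *; exact: proof_irrelevance.
    by rewrite Fm_eval.
  rewrite -(@piA _ _ p q); split.
  + move=> E; apply/(@hV_eq omega (toO (subst sigma phi)) (toO (subst sigma psi))).
    by rewrite (key _ p) (key _ q) E.
  + move=> Hm; apply: hi; rewrite -(key _ p) -(key _ q); exact/hV_eq.
Qed.

End Proofs.

Theorem lemma3p5 (L : language) (V : algebra L -> Prop)
    (Sigma : seq (identity L)) :
  equational_class V ->
  (exact V Sigma <-> iso_to_subalgebra (Fp V Sigma (VarS Sigma)) (FV V (omega))).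
Proof. move=> HV; exact: main. Qed.
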